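(* Let $G=(V,E)$ be a connected graph and let $\Gamma(G)=\{G_\pi:\ \pi:E\to\{\pm1\},\ \rho(G_\pi)<\rho(G)\}$. Then $\Gamma(G)$ is empty if and only if $G$ is a tree or a unicyclic graph whose unique cycle has odd length.
   Context: All graphs are finite, simple and undirected. A signed graph $G_\pi$ is a pair $(G,\pi)$ with $\pi:E\to\{+1,-1\}$; its adjacency matrix has entry $\pi(\{i,j\})$ for adjacent $i,j$ and $0$ otherwise, and its eigenvalues are those of this symmetric matrix. $\rho(G_\pi)$ denotes the largest modulus of an eigenvalue of $G_\pi$, and $\rho(G)$ the spectral radius of the adjacency matrix of $G$. *)

(* Defs.v *)
From HB Require Import structures.
From mathcomp Require Import all_boot all_order all_algebra.
From mathcomp Require Import polyrcf.
From mathcomp Require Import reals.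
Set Implicit Arguments. Unset Strict Implicit. Unset Printing Implicit Defensive.
Import Order.TTheory GRing.Theory Num.Theory.
Local Open Scope ring_scope.

Definition simple_graph (n : nat) (e : rel 'I_n) : Prop :=
  symmetric e /\ irreflexive e.

Definition connected_graph (n : nat) (e : rel 'I_n) : Prop :=
  forall x y : 'I_n, connect e x y.

Definition is_cycle (n : nat) (e : rel 'I_n) (c : seq 'I_n) : bool :=
  (2 < size c)%N && ucycleb e c.

Definition cycle_edges (n : nat) (c : seq 'I_n) : {set {set 'I_n}} :=
  [set [set x; next c x] | x in c].

Definition is_tree (n : nat) (e : rel 'I_n) : Prop :=
  connected_graph e /\ forall c, ~~ is_cycle e c.

Definition is_odd_unicyclic (n : nat) (e : rel 'I_n) : Prop :=
  connected_graph e /\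
  exists c, [/\ is_cycle e c,
     (forall c', is_cycle e c' -> cycle_edges c' = cycle_edges c)
   & odd (size c)].

(* A signature pi : E -> {+1,-1}, given on unordered pairs ({set 'I_n});
   pi X = true encodes sign -1.  Its values on non-edges are irrelevant. *)
Definition signed_adj (R : ringType) (n : nat) (e : rel 'I_n)
    (pi : {set 'I_n} -> bool) : 'M[R]_n :=
  \matrix_(i, j) (if e i j then (-1) ^+ pi [set i; j] else 0).

Definition adj (R : ringType) (n : nat) (e : rel 'I_n) : 'M[R]_n :=
  signed_adj R e (fun _ => false).

(* Largest modulus of an eigenvalue.  The matrices considered are real
   symmetric, so all eigenvalues are real roots of the characteristic
   polynomial; rootsR lists them. *)
Definition spec_rad (R : rcfType) (n : nat) (A : 'M[R]_n) : R :=
  \big[Num.max/0]_(x <- rootsR (char_poly A)) `|x|.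

(* Main.v *)
Require Import Defs.
From HB Require Import structures.
From mathcomp Require Import all_boot all_order all_algebra.
From mathcomp Require Import polyrcf reals.
From mathcomp Require Import ring lra zify.
From mathcomp Require classical_sets.
From Stdlib Require Import Classical.
Import Order.TTheory GRing.Theory Num.Theory.
Local Open Scope ring_scope.

Set Implicit Arguments. Unset Strict Implicit. Unset Printing Implicit Defensive.


Definition qf (R : nzRingType) n (M : 'M[R]_n) (x y : 'I_n -> R) : R :=
  \sum_i \sum_j x i * M i j * y j.
Definition dotv (R : nzRingType) n (x y : 'I_n -> R) : R := \sum_i x i * y i.

Lemma qf_linl (R : comNzRingType) n (M : 'M[R]_n) x x' y a b :
  qf M (fun i => a * x i + b * x' i) y = a * qf M x y + b * qf M x' y.
Proof.
rewrite /qf !mulr_sumr -big_split; apply: eq_bigr => i _.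
rewrite !mulr_sumr -big_split; apply: eq_bigr => j _ /=; ring.
Qed.

Lemma qf_sym (R : comNzRingType) n (M : 'M[R]_n) x y :
  (forall i j, M i j = M j i) -> qf M x y = qf M y x.
Proof.
move=> hM; rewrite /qf exchange_big; apply: eq_bigr => i _; apply: eq_bigr => j _.
rewrite hM; ring.
Qed.

Lemma qf_linr (R : comNzRingType) n (M : 'M[R]_n) x y y' a b :
  (forall i j, M i j = M j i) ->
  qf M x (fun i => a * y i + b * y' i) = a * qf M x y + b * qf M x y'.
Proof.
move=> hM; rewrite qf_sym // qf_linl (qf_sym _ y) // (qf_sym _ y') //.
Qed.

Lemma discr (R : realFieldType) (a b c : R) :
  0 <= c -> (forall t, 0 <= a + 2 * b * t + c * t ^+ 2) -> b ^+ 2 <= a * c.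
Proof.
move=> c0 h; have [cp|] := ltP 0 c.
  have := h (- b / c); set t := - b / c => ht.
  have ct : c * t = - b by rewrite /t mulrC divfK // gt_eqF.
  have : 0 <= c * (a + 2 * b * t + c * t ^+ 2) by rewrite mulr_ge0 // ltW.
  have -> : c * (a + 2 * b * t + c * t ^+ 2) = a * c + 2 * b * (c * t) + (c * t) ^+ 2 by ring.
  rewrite ct => H.
  have E : a * c + 2 * b * - b + (- b) ^+ 2 = a * c - b ^+ 2 by ring.
  by rewrite E subr_ge0 in H.
move=> c0'; have ce : c = 0 by apply/le_anti; rewrite c0 c0'.
rewrite ce in h *.
rewrite mulr0; have [->|bn0] := eqVneq b 0; first by rewrite expr2 mulr0.
have := h (- (a + 1) / (2 * b)).
have -> : 2 * b * (- (a + 1) / (2 * b)) = - (a + 1).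
  by rewrite mulrC divfK // mulf_neq0 // pnatr_eq0.
by rewrite mul0r addr0 => H; exfalso; lra.
Qed.

Lemma psd_cs (R : realFieldType) n (M : 'M[R]_n) x y :
  (forall i j, M i j = M j i) -> (forall z, 0 <= qf M z z) ->
  qf M x y ^+ 2 <= qf M x x * qf M y y.
Proof.
move=> hM hp; apply: discr => // t.
have := hp (fun i => 1 * x i + t * y i).
rewrite qf_linl !qf_linr // (@qf_sym _ _ M y x hM).
have -> : 1 * (1 * qf M x x + t * qf M x y) + t * (1 * qf M x y + t * qf M y y)
  = qf M x x + 2 * qf M x y * t + qf M y y * t ^+ 2 by ring.
done.
Qed.


Lemma dotv_ge0 (R : realFieldType) n (x : 'I_n -> R) : 0 <= dotv x x.
Proof. by apply: sumr_ge0 => i _; rewrite -expr2 sqr_ge0. Qed.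

Lemma dotv_eq0 (R : realFieldType) n (x : 'I_n -> R) : dotv x x = 0 -> forall i, x i = 0.
Proof.
move=> /eqP; rewrite psumr_eq0 => [/allP h i|i _]; last by rewrite -expr2 sqr_ge0.
by have := h i (mem_index_enum _); rewrite -expr2 sqrf_eq0 => /eqP.
Qed.

Lemma dot_cs (R : realFieldType) n (x y : 'I_n -> R) :
  dotv x y ^+ 2 <= dotv x x * dotv y y.
Proof.
apply: discr; first exact: dotv_ge0.
move=> t; have := dotv_ge0 (fun i => x i + t * y i).
have -> : dotv (fun i => x i + t * y i) (fun i => x i + t * y i) =
  dotv x x + (2 * t) * dotv x y + t ^+ 2 * dotv y y.
  rewrite /dotv !mulr_sumr -!big_split; apply: eq_bigr => i _ /=; ring.
have -> : dotv x x + 2 * dotv x y * t + dotv y y * t ^+ 2 =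
  dotv x x + (2 * t) * dotv x y + t ^+ 2 * dotv y y by ring.
done.
Qed.

Definition rapp (R : nzRingType) n (C : 'M[R]_n) (w : 'I_n -> R) : 'I_n -> R :=
  fun k => \sum_j w j * C j k.

Lemma rapp_bnd (R : realFieldType) n (C : 'M[R]_n) w :
  dotv (rapp C w) (rapp C w) <= (\sum_k \sum_j C j k ^+ 2) * dotv w w.
Proof.
rewrite /dotv mulr_suml; apply: ler_sum => k _.
have := dot_cs w (fun j => C j k); rewrite /dotv -expr2 mulrC.
by under [X in _ <= X * _ -> _]eq_bigr do rewrite -expr2.
Qed.

Lemma qf_app (R : comNzRingType) n (M : 'M[R]_n) x y :
  qf M x y = dotv x (fun i => \sum_j M i j * y j).
Proof.
by rewrite /qf /dotv; apply: eq_bigr => i _; rewrite mulr_sumr; apply: eq_bigr => j _; rewrite mulrA.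
Qed.

Lemma qf_rapp (R : comNzRingType) n (M : 'M[R]_n) x y :
  qf M x y = dotv (rapp M x) y.
Proof.
rewrite /qf /dotv /rapp exchange_big; apply: eq_bigr => j _; rewrite mulr_suml.
by apply: eq_bigr.
Qed.

Lemma sq_bound (R : realFieldType) (a b K : R) :
  0 <= b -> 0 <= K -> a ^+ 2 <= K * b ^+ 2 -> `|a| <= (1 + K) * b.
Proof.
move=> b0 K0 h; have [a0|a0] := leP 0 a.
  rewrite ger0_norm //; have [cb|bc] := leP a b; first by nra.
  nra.
rewrite ltr0_norm //; have [cb|bc] := leP (- a) b; first by nra.
nra.
Qed.

Lemma psd_zero (R : realFieldType) n (M : 'M[R]_n) x :
  (forall i j, M i j = M j i) -> (forall z, 0 <= qf M z z) ->
  qf M x x = 0 -> forall y, qf M y x = 0.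
Proof.
move=> hM hp hx y; have := psd_cs y x hM hp; rewrite hx mulr0.
by move=> h; apply/eqP; rewrite -sqrf_eq0 eq_le h sqr_ge0.
Qed.

Lemma qf_delta (R : comNzRingType) n (M : 'M[R]_n) x i :
  qf M (fun k => (k == i)%:R) x = \sum_j M i j * x j.
Proof.
rewrite /qf (bigD1 i) //= [X in _ + X]big1 ?addr0.
  by apply: eq_bigr => j _; rewrite eqxx mul1r.
by move=> k /negbTE ->; apply: big1 => j _; rewrite !mul0r.
Qed.


Lemma sum_kron (R : nzRingType) n (i : 'I_n) (f : 'I_n -> R) :
  \sum_j (i == j)%:R * f j = f i.
Proof.
rewrite (bigD1 i) //= eqxx mul1r [X in _ + X]big1 ?addr0 //.
by move=> j; rewrite eq_sym => /negbTE ->; rewrite mul0r.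
Qed.

Lemma qf_shift (R : comNzRingType) n (M : 'M[R]_n) lam x y :
  qf (\matrix_(i, j) ((i == j)%:R * lam - M i j)) x y = lam * dotv x y - qf M x y.
Proof.
rewrite /qf /dotv mulr_sumr -sumrB; apply: eq_bigr => i _.
have -> : \sum_j x i * (\matrix_(i0, j0) ((i0 == j0)%:R * lam - M i0 j0)) i j * y j
   = \sum_j (i == j)%:R * (lam * x i * y j) - \sum_j x i * M i j * y j.
  by rewrite -sumrB; apply: eq_bigr => j _; rewrite mxE; ring.
by rewrite sum_kron; congr (_ - _); ring.
Qed.

Lemma qf_bound (R : realFieldType) n (M : 'M[R]_n) x :
  `|qf M x x| <= (1 + \sum_k \sum_j M j k ^+ 2) * dotv x x.
Proof.
have K0 : 0 <= \sum_k \sum_j M j k ^+ 2.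
  by apply: sumr_ge0 => k _; apply: sumr_ge0 => j _; exact: sqr_ge0.
apply: sq_bound => //; first exact: dotv_ge0.
rewrite qf_rapp; apply: (le_trans (dot_cs _ _)).
rewrite expr2 mulrA; apply: ler_wpM2r; first exact: dotv_ge0.
exact: rapp_bnd.
Qed.


Lemma rayleigh_max (R : realType) n (M : 'M[R]_n) : (0 < n)%N ->
  (forall i j, M i j = M j i) ->
  exists lam, (exists2 x : 'I_n -> R, (exists i, x i != 0) &
                  forall j, \sum_k M j k * x k = lam * x j)
              /\ forall z, qf M z z <= lam * dotv z z.
Proof.
move=> n0 hM.
set K := 1 + \sum_k \sum_j M j k ^+ 2.
have K0 : 0 <= K.
  rewrite /K; apply: addr_ge0 => //.
  by apply: sumr_ge0 => k _; apply: sumr_ge0 => j _; exact: sqr_ge0.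
pose S : classical_sets.set R := (fun r : R => exists x, dotv x x != 0 /\ r = qf M x x / dotv x x).
have supS : classical_sets.has_sup S.
  split.
    exists (qf M (fun _ => 1) (fun _ => 1) / dotv (fun _ : 'I_n => 1) (fun _ => 1)).
    exists (fun _ => 1); split => //.
    rewrite /dotv; under eq_bigr do rewrite mulr1.
    by rewrite sumr_const card_ord pnatr_eq0 -lt0n.
  exists K => r [x [hx ->]].
  have dp : 0 < dotv x x by rewrite lt_def hx dotv_ge0.
  rewrite ler_pdivrMr //; apply: le_trans (qf_bound M x).
  exact: ler_norm.
set lam := sup S.
have ub : forall z, qf M z z <= lam * dotv z z.
  move=> z; have [d0|dn0] := eqVneq (dotv z z) 0.
    have z0 := dotv_eq0 d0.
    rewrite d0 mulr0.
    have -> : qf M z z = 0.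
      by rewrite /qf big1 // => i _; rewrite big1 // => j _; rewrite z0 !mul0r.
    by [].
  have dp : 0 < dotv z z by rewrite lt_def dn0 dotv_ge0.
  rewrite -ler_pdivrMr //; apply: sup_upper_bound => //.
  by exists z.
exists lam; split => //.
pose B := \matrix_(i, j) ((i == j)%:R * lam - M i j).
have hB : forall i j, B i j = B j i.
  by move=> i j; rewrite !mxE hM eq_sym.
have Bpsd : forall z, 0 <= qf B z z.
  by move=> z; rewrite qf_shift subr_ge0; apply: ub.
case: (boolP (\det B == 0)) => [/det0P [v vn0 vB]|detn0].
  exists (fun k => v 0 k).
    apply/existsP; apply: contraR vn0 => /existsPn h; apply/eqP/rowP => k.
    by rewrite mxE; apply/eqP; move: (h k); rewrite negbK.
  move=> j; have := congr1 (fun m : 'rV[R]_n => m 0 j) vB; rewrite !mxE.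
  under eq_bigr do rewrite mxE.
  have -> : \sum_i v 0 i * ((i == j)%:R * lam - M i j) =
     \sum_i (j == i)%:R * (lam * v 0 i) - \sum_i M j i * v 0 i.
    by rewrite -sumrB; apply: eq_bigr => i _; rewrite hM eq_sym; ring.
  by rewrite sum_kron => /eqP; rewrite subr_eq0 => /eqP ->.
exfalso.
have Bu : B \in unitmx by rewrite unitmxE unitfE.
set C := invmx B.
set KC := \sum_k \sum_j C j k ^+ 2.
have KC0 : 0 <= KC.
  by apply: sumr_ge0 => k _; apply: sumr_ge0 => j _; exact: sqr_ge0.
set KB : R := `|lam| + K.
have KB0 : 0 <= KB by rewrite /KB addr_ge0.
have key : forall x, dotv x x <= KC * KB * qf B x x.
  move=> x; set w := rapp B x.
  have xw : forall k, rapp C w k = x k.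
    move=> k.
    have := congr1 (fun m : 'rV[R]_n => m 0 k) (mulmxK Bu (\row_j x j)).
    rewrite !mxE => <-; rewrite /rapp /w /rapp; apply: eq_bigr => j _.
    by rewrite [in RHS]mxE; congr (_ * _); apply: eq_bigr => i _; rewrite !mxE.
  have h1 : dotv x x <= KC * dotv w w.
    have -> : dotv x x = dotv (rapp C w) (rapp C w) by apply: eq_bigr => k0 _; rewrite xw.
    exact: rapp_bnd.
  have h2 : dotv w w <= KB * qf B x x.
    have ww : dotv w w = qf B x w by rewrite qf_rapp.
    have cs := psd_cs x w hB Bpsd.
    have hw : qf B w w <= KB * dotv w w.
      rewrite qf_shift /KB mulrDl.
      have a1 : lam * dotv w w <= `|lam| * dotv w w by rewrite ler_wpM2r ?dotv_ge0 // ler_norm.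
      have a2 : - qf M w w <= K * dotv w w.
        by apply: le_trans (qf_bound M w); rewrite -normrN ler_norm.
      lra.
    have qx0 : 0 <= qf B x x by [].
    have [w0|wp] := eqVneq (dotv w w) 0.
      by rewrite w0 mulr_ge0.
    have wpos : 0 < dotv w w by rewrite lt_def wp dotv_ge0.
    have : dotv w w * dotv w w <= dotv w w * (KB * qf B x x).
      have -> : dotv w w * dotv w w = qf B x w ^+ 2 by rewrite ww expr2.
      apply: (le_trans cs).
      have -> : dotv w w * (KB * qf B x x) = qf B x x * (KB * dotv w w) by ring.
      by rewrite ler_wpM2l.
    by rewrite ler_pM2l.
  apply: (le_trans h1); rewrite -mulrA; apply: ler_wpM2l => //.
have d0 : 0 < KC * KB + 1 by rewrite ltr_wpDl // mulr_ge0.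
set dl := (KC * KB + 1)^-1.
have dlp : 0 < dl by rewrite invr_gt0.
have [r [x [xn0 ->]] hr] := sup_adherent dlp supS.
rewrite -/lam in hr.
have dp : 0 < dotv x x by rewrite lt_def xn0 dotv_ge0.
have h := key x; rewrite qf_shift in h.
move: hr; rewrite ltr_pdivlMr // => hr.
have e1 : (KC * KB + 1) * dl = 1 by rewrite mulfV // gt_eqF.
have kk : 0 <= KC * KB by rewrite mulr_ge0.
nra.
Qed.


Lemma sr_ge0 (R : rcfType) n (M : 'M[R]_n) : 0 <= spec_rad M.
Proof. exact: bigmax_ge_id. Qed.

Lemma root_le_sr (R : rcfType) n (M : 'M[R]_n) l :
  root (char_poly M) l -> `|l| <= spec_rad M.
Proof.
move=> hr; apply: le_bigmax_seq => //.
have nz : char_poly M != 0 by apply: monic_neq0; exact: char_poly_monic.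
by rewrite -(roots_on_rootsR nz) hr andbT.
Qed.

Lemma sr_attain (R : rcfType) n (M : 'M[R]_n) :
  spec_rad M = 0 \/ exists2 l, root (char_poly M) l & `|l| = spec_rad M.
Proof.
have nz : char_poly M != 0 by apply: monic_neq0; exact: char_poly_monic.
rewrite /spec_rad.
suff [h|[l hl h]] : \big[Num.max/0]_(x <- rootsR (char_poly M)) `|x| = 0 \/
   exists2 l, l \in rootsR (char_poly M) & `|l| = \big[Num.max/0]_(x <- rootsR (char_poly M)) `|x|.
- by left.
- by right; exists l => //; move: hl; rewrite -(roots_on_rootsR nz) => /andP[].
elim: (rootsR _) => [|a s IH]; first by left; rewrite big_nil.
rewrite big_cons /Order.max; case: ifP => _.
  case: IH => [->|[l hl <-]]; first by left.
  by right; exists l => //; rewrite inE hl orbT.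
by right; exists a => //; rewrite inE eqxx.
Qed.

Lemma eig_root (R : fieldType) n (M : 'M[R]_n) l (x : 'I_n -> R) :
  (forall i j, M i j = M j i) -> (exists i, x i != 0) ->
  (forall j, \sum_k M j k * x k = l * x j) -> root (char_poly M) l.
Proof.
move=> hM [i xi] hx; rewrite -eigenvalue_root_char; apply/eigenvalueP.
exists (\row_j x j).
  apply/rowP => j; rewrite !mxE -hx; apply: eq_bigr => k _.
  by rewrite mxE hM mulrC.
by apply/eqP => /rowP /(_ i); rewrite !mxE; apply/eqP.
Qed.

Lemma root_eig (R : fieldType) n (M : 'M[R]_n) l :
  (forall i j, M i j = M j i) -> root (char_poly M) l ->
  exists2 x : 'I_n -> R, (exists i, x i != 0) & (forall j, \sum_k M j k * x k = l * x j).
Proof.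
move=> hM; rewrite -eigenvalue_root_char => /eigenvalueP [v hv vn0].
exists (fun j => v 0 j).
  apply/existsP; apply: contraR vn0 => /existsPn h; apply/eqP/rowP => k.
  by rewrite mxE; apply/eqP; move: (h k); rewrite negbK.
move=> j; have := congr1 (fun m : 'rV[R]_n => m 0 j) hv; rewrite !mxE => <-.
by apply: eq_bigr => k _; rewrite hM mulrC.
Qed.

Lemma rayleigh (R : realType) n (M : 'M[R]_n) z :
  (forall i j, M i j = M j i) -> `|qf M z z| <= spec_rad M * dotv z z.
Proof.
move=> hM; case: n M z hM => [|n] M z hM.
  by rewrite /qf /dotv !big_ord0 normr0 mulr0.
have [l1 [[x1 x1n hx1] h1]] := rayleigh_max (erefl : (0 < n.+1)%N) hM.
pose N := \matrix_(i, j) (- M i j).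
have hN : forall i j, N i j = N j i by move=> i j; rewrite !mxE hM.
have [l2 [[x2 x2n hx2] h2]] := rayleigh_max (erefl : (0 < n.+1)%N) hN.
have r1 := root_le_sr (eig_root hM x1n hx1).
have r2 : `|- l2| <= spec_rad M.
  apply: root_le_sr; apply: (eig_root hM x2n) => j.
  have E : \sum_k N j k * x2 k = - \sum_k M j k * x2 k.
    by rewrite -sumrN; apply: eq_bigr => k _; rewrite mxE mulNr.
  by have := hx2 j; rewrite E mulNr => <-; rewrite opprK.
have qN : qf N z z = - qf M z z.
  rewrite /qf -sumrN; apply: eq_bigr => i _; rewrite -sumrN; apply: eq_bigr => j _.
  by rewrite mxE; ring.
have d0 := dotv_ge0 z.
rewrite normrN in r2.
have a1 : l1 * dotv z z <= spec_rad M * dotv z z.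
  by apply: ler_wpM2r => //; exact: le_trans (ler_norm _) r1.
have a2 : l2 * dotv z z <= spec_rad M * dotv z z.
  by apply: ler_wpM2r => //; exact: le_trans (ler_norm _) r2.
have := h1 z; have := h2 z; rewrite qN => b2 b1.
rewrite ler_norml; apply/andP; split; lra.
Qed.


Lemma adjE (R : nzRingType) n (e : rel 'I_n) i j :
  adj R e i j = if e i j then 1 else 0.
Proof. by rewrite /adj /signed_adj mxE. Qed.

Lemma sadjE (R : nzRingType) n (e : rel 'I_n) pi i j :
  signed_adj R e pi i j = if e i j then (-1) ^+ pi [set i; j] else 0.
Proof. by rewrite /signed_adj mxE. Qed.

Lemma sadj_sym (R : nzRingType) n (e : rel 'I_n) pi :
  symmetric e -> forall i j, signed_adj R e pi i j = signed_adj R e pi j i.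
Proof. by move=> he i j; rewrite !sadjE he finset.setUC. Qed.

Lemma adj_sym (R : nzRingType) n (e : rel 'I_n) :
  symmetric e -> forall i j, adj R e i j = adj R e j i.
Proof. by move=> he i j; rewrite !adjE he. Qed.

Lemma qf_eig (R : comNzRingType) n (M : 'M[R]_n) l x :
  (forall j, \sum_k M j k * x k = l * x j) -> qf M x x = l * dotv x x.
Proof.
move=> hx; rewrite qf_app /dotv mulr_sumr; apply: eq_bigr => i _.
by rewrite hx; ring.
Qed.

Lemma dotv_norm (R : realFieldType) n (x : 'I_n -> R) :
  dotv (fun i => `|x i|) (fun i => `|x i|) = dotv x x.
Proof.
apply: eq_bigr => i _; rewrite -normrM ger0_norm // -expr2; exact: sqr_ge0.
Qed.

Lemma dotv_gt0 (R : realFieldType) n (x : 'I_n -> R) :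
  (exists i, x i != 0) -> 0 < dotv x x.
Proof.
move=> [i xi]; rewrite lt_def dotv_ge0 andbT; apply/eqP => /dotv_eq0 /(_ i).
by apply/eqP.
Qed.

Lemma qf_abs (R : realFieldType) n (e : rel 'I_n) pi x :
  `|qf (signed_adj R e pi) x x| <= qf (adj R e) (fun i => `|x i|) (fun i => `|x i|).
Proof.
apply: (le_trans (ler_norm_sum _ _ _)); apply: ler_sum => i _.
apply: (le_trans (ler_norm_sum _ _ _)); apply: ler_sum => j _.
rewrite !normrM sadjE adjE; case: (e i j); last by rewrite normr0.
by rewrite normrX normrN1 expr1n.
Qed.

Lemma sr_le (R : realType) n (e : rel 'I_n) pi :
  simple_graph e -> spec_rad (signed_adj R e pi) <= spec_rad (adj R e).
Proof.
move=> [hs hi]; case: (sr_attain (signed_adj R e pi)) => [->|[l hl <-]].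
  exact: sr_ge0.
have [x xn hx] := root_eig (sadj_sym R pi hs) hl.
have dp := dotv_gt0 xn.
rewrite -(ler_pM2r dp); have := qf_abs e pi x.
rewrite (qf_eig hx) normrM (ger0_norm (dotv_ge0 x)) => h.
apply: (le_trans h); rewrite -(dotv_norm x).
exact: le_trans (ler_norm _) (rayleigh _ (adj_sym R hs)).
Qed.

Definition sgn (R : nzRingType) (b : bool) : R := (-1) ^+ b.

Lemma sgn_sq (R : nzRingType) b : sgn R b * sgn R b = 1.
Proof. by case: b; rewrite /sgn /= ?expr1 ?expr0 ?mulr1 // mulrNN mulr1. Qed.

Definition switching n (e : rel 'I_n) (pi : {set 'I_n} -> bool) :=
  exists (sg : bool) (s : 'I_n -> bool),
    forall i j, e i j -> pi [set i; j] = sg (+) s i (+) s j.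

Lemma sr_ge_switch (R : realType) n (e : rel 'I_n) pi :
  simple_graph e -> switching e pi ->
  spec_rad (adj R e) <= spec_rad (signed_adj R e pi).
Proof.
move=> [hs hi] [sg [s hsw]]; case: (sr_attain (adj R e)) => [->|[l hl <-]].
  exact: sr_ge0.
have [x xn hx] := root_eig (adj_sym R hs) hl.
pose z := fun k => sgn R (s k) * x k.
have dz : dotv z z = dotv x x.
  apply: eq_bigr => i _; rewrite /z.
  have := sgn_sq R (s i); move: (sgn R (s i)) => c hc.
  by rewrite mulrACA hc mul1r.
have qz : qf (signed_adj R e pi) z z = sgn R sg * qf (adj R e) x x.
  rewrite /qf mulr_sumr; apply: eq_bigr => i _.
  rewrite mulr_sumr; apply: eq_bigr => j _.
  rewrite sadjE adjE /z; case eij: (e i j); last by ring.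
  rewrite hsw // /sgn !signr_addb.
  have := sgn_sq R (s i); have := sgn_sq R (s j); rewrite /sgn.
  move: ((-1) ^+ s i) ((-1) ^+ s j) => a b hb ha.
  have -> : a * x i * ((-1) ^+ sg * a * b) * (b * x j) =
     (a * a) * (b * b) * ((-1) ^+ sg * (x i * 1 * x j)) by ring.
  by rewrite ha hb !mul1r.
have dp := dotv_gt0 xn.
rewrite -(ler_pM2r dp).
have := rayleigh z (sadj_sym R pi hs).
rewrite dz qz normrM /sgn normrX normrN1 expr1n mul1r (qf_eig hx) normrM.
by rewrite (ger0_norm (dotv_ge0 x)).
Qed.


Lemma sr_pos (R : realType) n (e : rel 'I_n) i j :
  simple_graph e -> e i j -> 0 < spec_rad (adj R e).
Proof.
move=> [hs hi] eij; rewrite lt_def sr_ge0 andbT; apply/eqP => h0.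
have hA := adj_sym R hs.
have q0 : forall z, qf (adj R e) z z = 0.
  move=> z; have := rayleigh z hA; rewrite h0 mul0r normr_le0 => /eqP //.
have psd : forall z, 0 <= qf (adj R e) z z by move=> z; rewrite q0.
have := psd_zero hA psd (q0 (fun k => (k == j)%:R)) (fun k => (k == i)%:R).
rewrite qf_delta.
have -> : \sum_j0 adj R e i j0 * (j0 == j)%:R = adj R e i j.
  rewrite (bigD1 j) //= eqxx mulr1 [X in _ + X]big1 ?addr0 //.
  by move=> k /negbTE ->; rewrite mulr0.
by rewrite adjE eij => /eqP; rewrite oner_eq0.
Qed.

Lemma abs_sum2 (R : realDomainType) n (t : 'I_n -> 'I_n -> R) :
  `|\sum_i \sum_j t i j| = \sum_i \sum_j `|t i j| ->
  (forall i j, 0 <= t i j) \/ (forall i j, t i j <= 0).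
Proof.
move=> h.
have z2 : forall f : 'I_n -> 'I_n -> R, (forall i j, 0 <= f i j) ->
    \sum_i \sum_j f i j = 0 -> forall i j, f i j = 0.
  move=> f hf hs i j.
  have h1 : \sum_j f i j = 0.
    by apply: (psumr_eq0P _ hs) => // k _; apply: sumr_ge0 => l _; exact: hf.
  by apply: (psumr_eq0P _ h1) => // k _; exact: hf.
have [s0|s0] := leP 0 (\sum_i \sum_j t i j).
  left; move=> i j.
  have H1 : forall a b, 0 <= `|t a b| - t a b by move=> a b; rewrite subr_ge0 ler_norm.
  have H2 : \sum_i \sum_j (`|t i j| - t i j) = 0.
    rewrite (eq_bigr (fun i => \sum_j `|t i j| - \sum_j t i j)); last first.
      by move=> k _; rewrite sumrB.
    by rewrite sumrB -h ger0_norm // subrr.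
  have := z2 (fun i j => `|t i j| - t i j) H1 H2 i j.
  by move=> /eqP; rewrite subr_eq0 => /eqP <-.
right; move=> i j.
have H1 : forall a b, 0 <= `|t a b| + t a b.
  by move=> a b; have := ler_norm (- t a b); rewrite normrN; lra.
have H2 : \sum_i \sum_j (`|t i j| + t i j) = 0.
  rewrite (eq_bigr (fun i => \sum_j `|t i j| + \sum_j t i j)); last first.
    by move=> k _; rewrite big_split.
  by rewrite big_split /= -h ltr0_norm // addNr.
have := z2 (fun i j => `|t i j| + t i j) H1 H2 i j.
by move=> /eqP; rewrite addr_eq0 => /eqP hh; rewrite -oppr_ge0 -hh.
Qed.


Lemma sign_rel (R : realDomainType) (a b : R) (p : bool) : a != 0 -> b != 0 ->
  (0 <= a * (-1) ^+ p * b -> p = (a < 0) (+) (b < 0)) /\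
  (a * (-1) ^+ p * b <= 0 -> p = ~~ ((a < 0) (+) (b < 0))).
Proof.
move=> an bn.
have [a0|a0] := ltP a 0; have [b0|b0] := ltP b 0.
- have ab : 0 < a * b by nra.
  by case: p; rewrite ?expr1 ?expr0 /=; split => h //; nra.
- have b0' : 0 < b by rewrite lt_def bn b0.
  have ab : a * b < 0 by nra.
  by case: p; rewrite ?expr1 ?expr0 /=; split => h //; nra.
- have a0' : 0 < a by rewrite lt_def an a0.
  have ab : a * b < 0 by nra.
  by case: p; rewrite ?expr1 ?expr0 /=; split => h //; nra.
- have b0' : 0 < b by rewrite lt_def bn b0.
  have a0' : 0 < a by rewrite lt_def an a0.
  have ab : 0 < a * b by nra.
  by case: p; rewrite ?expr1 ?expr0 /=; split => h //; nra.
Qed.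

Lemma sr_strict (R : realType) n (e : rel 'I_n) pi :
  simple_graph e -> connected_graph e -> 0 < spec_rad (adj R e) ->
  spec_rad (signed_adj R e pi) = spec_rad (adj R e) -> switching e pi.
Proof.
move=> [hs hi] hc rp heq.
set A := adj R e; set Ap := signed_adj R e pi; set rho := spec_rad A.
have hA : forall i j, A i j = A j i := adj_sym R hs.
have hAp : forall i j, Ap i j = Ap j i := sadj_sym R pi hs.
case: (sr_attain Ap) => [h0|[l hl hlr]]; first by move: rp; rewrite -heq h0 ltxx.
have [x xn hx] := root_eig hAp hl.
pose y := fun i => `|x i|.
have dp := dotv_gt0 xn.
set d := dotv x x in dp.
have dy : dotv y y = d by exact: dotv_norm.
have q1 : `|qf Ap x x| = rho * d.
  by rewrite (qf_eig hx) normrM (ger0_norm (dotv_ge0 x)) hlr heq.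
have q2 := qf_abs e pi x; rewrite -/Ap -/y in q2.
have q3 : qf A y y <= rho * d.
  by rewrite -dy; exact: le_trans (ler_norm _) (rayleigh y hA).
have T1 : qf A y y = rho * d by apply/le_anti; rewrite q3 -q1 q2.
have T2 : `|qf Ap x x| = qf A y y by rewrite q1 T1.
pose B := \matrix_(i, j) ((i == j)%:R * rho - A i j).
have hB : forall i j, B i j = B j i.
  by move=> i j; rewrite !mxE hs eq_sym.
have Bpsd : forall z, 0 <= qf B z z.
  move=> z; rewrite qf_shift subr_ge0 mulrC.
  by rewrite mulrC; exact: le_trans (ler_norm _) (rayleigh z hA).
have By : qf B y y = 0 by rewrite qf_shift dy T1 subrr.
have perr : forall i, \sum_j A i j * y j = rho * y i.
  move=> i; have := psd_zero hB Bpsd By (fun k => (k == i)%:R).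
  rewrite qf_delta.
  have -> : \sum_j B i j * y j = \sum_j (i == j)%:R * (rho * y j) - \sum_j A i j * y j.
    by rewrite -sumrB; apply: eq_bigr => j _; rewrite mxE; ring.
  by rewrite sum_kron => /eqP; rewrite subr_eq0 => /eqP ->.
have Acl : forall i j, e i j -> y i = 0 -> y j = 0.
  move=> i j eij yi.
  have := perr i; rewrite yi mulr0 => h.
  have hz : A i j * y j = 0.
    apply: (psumr_eq0P _ h) => // k _.
    by rewrite /A adjE; case: (e i k); rewrite ?mul1r ?mul0r // /y normr_ge0.
  by move: hz; rewrite /A adjE eij mul1r.
have xnz : forall i, x i != 0.
  have cl : closed e [pred i | x i == 0].
    apply: intro_closed; first exact: sym_connect_sym.
    move=> i j eij; rewrite !inE => /eqP xi; apply/eqP.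
    by apply/normr0_eq0; apply: (Acl i j eij); rewrite /y xi normr0.
  move=> i; case: xn => i0 xi0.
  have := closed_connect cl (hc i0 i); rewrite !inE.
  by move=> h; apply: contra xi0; rewrite h.
pose t := fun i j => x i * Ap i j * x j.
have ht : `|\sum_i \sum_j t i j| = \sum_i \sum_j `|t i j|.
  rewrite T2; apply: eq_bigr => i _; apply: eq_bigr => j _.
  rewrite /t !normrM /Ap sadjE adjE; case: (e i j); last by rewrite normr0 mulr0 mul0r.
  by rewrite normrX normrN1 expr1n.
case: (abs_sum2 ht) => hsg.
  exists false, (fun i => x i < 0) => i j eij /=.
  have := hsg i j; rewrite /t /Ap sadjE eij.
  by case: (sign_rel (pi [set i; j]) (xnz i) (xnz j)).
exists true, (fun i => x i < 0) => i j eij /=.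
have := hsg i j; rewrite /t /Ap sadjE eij.
by case: (sign_rel (pi [set i; j]) (xnz i) (xnz j)) => _ h2 /h2 ->; rewrite addNb.
Qed.


Fixpoint wparh (T : Type) (w : T -> T -> bool) (a : T) (t : seq T) : bool :=
  if t is b :: t' then w a b (+) wparh w b t' else false.

Definition wpar (T : Type) (w : T -> T -> bool) (s : seq T) : bool :=
  if s is a :: t then wparh w a t else false.

Definition walk (T : Type) (e : rel T) (s : seq T) : bool :=
  if s is a :: t then path e a t else true.

Lemma wpar_rcons (T : Type) (w : T -> T -> bool) x s y :
  wpar w (rcons (x :: s) y) = wpar w (x :: s) (+) w (last x s) y.
Proof.
rewrite /=; elim: s x => [|b s IH] x /=; first by rewrite addbF.
by rewrite IH addbA.
Qed.

Lemma wpar_cat (T : Type) (w : T -> T -> bool) x s1 y s2 :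
  wpar w (x :: s1 ++ y :: s2) = wpar w (x :: s1) (+) w (last x s1) y (+) wpar w (y :: s2).
Proof.
rewrite /=; elim: s1 x => [|b s IH] x /=; first by [].
by rewrite IH !addbA.
Qed.

Lemma walk_cat (T : Type) (e : rel T) x s1 y s2 :
  walk e (x :: s1 ++ y :: s2) = [&& walk e (x :: s1), e (last x s1) y & walk e (y :: s2)].
Proof. by rewrite /= cat_path. Qed.

Lemma rev_ne (T : Type) (b : T) s : exists c t, rev (b :: s) = c :: t /\ last c t = b.
Proof.
case E: (rev (b :: s)) => [|c t].
  by have := congr1 size E; rewrite size_rev.
exists c, t; split => //.
by have := congr1 (last b) E; rewrite rev_cons last_rcons /= => <-.
Qed.

Lemma wpar_rev (T : Type) (w : T -> T -> bool) s :
  (forall x y, w x y = w y x) -> wpar w (rev s) = wpar w s.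
Proof.
move=> hw; elim: s => [|a s IH] //; case: s IH => [|b s] IH //.
have [c [t [E L]]] := rev_ne b s.
rewrite rev_cons E wpar_rcons -E IH L /= hw addbC.
by [].
Qed.

Lemma walk_rev (T : Type) (e : rel T) s :
  symmetric e -> walk e (rev s) = walk e s.
Proof.
move=> he; elim: s => [|a s IH] //; case: s IH => [|b s] IH //.
have [c [t [E L]]] := rev_ne b s.
rewrite rev_cons E /= rcons_path -/(walk e (c :: t)) -E IH L /= he andbC.
by [].
Qed.

Lemma nuniq_split (T : eqType) (s : seq T) : ~~ uniq s ->
  exists s1 y s2 s3, s = s1 ++ y :: s2 ++ y :: s3.
Proof.
elim: s => [|a s IH] //=; rewrite negb_and negbK => /orP [as_|/IH [s1 [y [s2 [s3 ->]]]]].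
  by case/splitPr: as_ => s2 s3; exists [::], a, s2, s3.
by exists (a :: s1), y, s2, s3.
Qed.

Definition cpar (T : eqType) (w : T -> T -> bool) (c : seq T) : bool :=
  \big[addb/false]_(x <- c) w x (next c x).

Lemma wparh_frel (T : eqType) (w : T -> T -> bool) (g : T -> T) b t :
  path (frel g) b t -> wparh w b t = \big[addb/false]_(x <- belast b t) w x (g x).
Proof.
elim: t b => [|c t IH] b /=; first by rewrite big_nil.
by case/andP => /eqP <- /IH ->; rewrite big_cons.
Qed.

Lemma np (T : eqType) (w : T -> T -> bool) a q :
  uniq (a :: q) -> wpar w (a :: rcons q a) = cpar w (a :: q).
Proof.
move=> u; have := cycle_next u; rewrite /cycle /= => hp.
by rewrite /= (wparh_frel _ hp) belast_rcons.
Qed.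

Lemma rot3 (T : eqType) (c : seq T) x : uniq c -> (2 < size c)%N -> x \in c ->
  exists y z, [/\ next c x = y, next c y = z, x != y, y != z & z != x].
Proof.
move=> u s3 /rot_to [i q E].
have u' : uniq (rot i c) by rewrite rot_uniq.
have s' : (2 < size (rot i c))%N by rewrite size_rot.
rewrite E in u' s'.
case: q E u' s' => [|y [|z r]] E u' s' //.
exists y, z; rewrite -(next_rot i u x) -(next_rot i u y) E.
move: u' => /and3P [hx hy _].
rewrite !inE !negb_or in hx hy.
case/andP: hx => xy /andP[xz _].
case/andP: hy => yz _.
have e1 : next (x :: y :: z :: r) x = y by rewrite /next /= eqxx.
have e2 : next (x :: y :: z :: r) y = z by rewrite /next /= eq_sym (negbTE xy) eqxx.
split => //; by rewrite eq_sym.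
Qed.

Lemma cedge_inj n (c : seq 'I_n) : uniq c -> (2 < size c)%N ->
  {in c &, injective (fun x => [set x; next c x])}.
Proof.
move=> u s3 x y xc yc /= E.
have [x1 [x2 [n1 n2 h1 h2 h3]]] := rot3 u s3 xc.
have : x \in [set y; next c y] by rewrite -E set21.
have : y \in [set x; next c x] by rewrite E set21.
rewrite !inE n1 => /orP [/eqP -> //|/eqP yx1] /orP [/eqP //|/eqP xny].
by move: h3; rewrite xny yx1 n2 eqxx.
Qed.

Lemma cpar_edges n (c : seq 'I_n) (f : {set 'I_n} -> bool) : uniq c -> (2 < size c)%N ->
  cpar (fun a b => f [set a; b]) c = \big[addb/false]_(X in cycle_edges c) f X.
Proof.
move=> u s3; rewrite /cycle_edges big_imset /=; last exact: cedge_inj.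
by rewrite /cpar big_uniq.
Qed.

Lemma card_edges n (c : seq 'I_n) : uniq c -> (2 < size c)%N ->
  #|cycle_edges c| = size c.
Proof.
move=> u s3; rewrite /cycle_edges card_in_imset; last exact: cedge_inj.
by apply/card_uniqP.
Qed.

Lemma xor_mem (T : finType) (E : {set T}) X0 :
  \big[addb/false]_(X in E) (X == X0) = (X0 \in E).
Proof.
case: (boolP (X0 \in E)) => h.
  rewrite (bigD1 X0) //= eqxx big1 //.
  by move=> X /andP[_ /negbTE].
by apply: big1 => X XE; apply: contraNF h => /eqP <-.
Qed.

Lemma xor_const (T : Type) (c : seq T) (b : bool) (f : T -> bool) :
  \big[addb/false]_(x <- c) (b (+) f x) = (b && odd (size c)) (+) \big[addb/false]_(x <- c) f x.
Proof.
elim: c => [|a c IH]; first by rewrite !big_nil andbF.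
rewrite !big_cons IH /=; move: (\big[addb/false]_(j <- c) f j) (odd (size c)) (f a).
by clear IH; move=> u v w; case: b u v w => [] [] [] [].
Qed.

Lemma wparh_tele (T : Type) (s : T -> bool) a t :
  wparh (fun x y => s x (+) s y) a t = s a (+) s (last a t).
Proof.
elim: t a => [|b t IH] a /=; first by rewrite addbb.
by rewrite IH addbA -(addbA (s a)) addbb addbF.
Qed.


Lemma wpar_split (T : Type) (w : T -> T -> bool) x s1 y s2 :
  wpar w (x :: s1 ++ y :: s2) = wpar w (x :: rcons s1 y) (+) wpar w (y :: s2).
Proof. by rewrite wpar_cat -rcons_cons wpar_rcons. Qed.

Lemma walk_split (T : Type) (e : rel T) x s1 y s2 :
  walk e (x :: s1 ++ y :: s2) = walk e (x :: rcons s1 y) && walk e (y :: s2).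
Proof. by rewrite /= cat_path rcons_path andbA. Qed.

Lemma closed_walk n (e : rel 'I_n) (w : 'I_n -> 'I_n -> bool) :
  irreflexive e -> (forall x y, w x y = w y x) ->
  (forall c, is_cycle e c -> cpar w c = false) ->
  forall a q, walk e (a :: rcons q a) -> wpar w (a :: rcons q a) = false.
Proof.
move=> hi hw hc a q; have [k] := ubnP (size q); elim: k a q => [|k IH] a q // hk hwk.
case: (boolP (uniq (a :: q))) => u.
  case: q hk hwk u => [|b [|b' q']] hk hwk u.
  - by move: hwk; rewrite /= hi.
  - by rewrite /= hw addbF addbb.
  - rewrite np //; apply: hc; rewrite /is_cycle /ucycleb u andbT /=.
    by [].
case: (nuniq_split u) => [s1 [y [s2 [s3 E]]]].
case: s1 E => [|b s1] [E1 E2].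
  subst y q.
  have -> : rcons (s2 ++ a :: s3) a = s2 ++ a :: rcons s3 a by rewrite rcons_cat.
  move: hwk; rewrite rcons_cat walk_split => /andP [w1 w2].
  rewrite wpar_split (IH a s2) ?(IH a s3) //.
  - by move: hk; rewrite size_cat /= ltnS; lia.
  - by move: hk; rewrite size_cat /= ltnS; lia.
subst b q.
have Eq : rcons (s1 ++ y :: s2 ++ y :: s3) a = s1 ++ y :: s2 ++ y :: rcons s3 a.
  by rewrite rcons_cat /= rcons_cat.
move: hwk; rewrite Eq walk_split walk_split => /and3P [w1 w2 w3].
rewrite wpar_split wpar_split (IH y s2) //; last first.
  by move: hk; rewrite size_cat /= size_cat /= ltnS; lia.
have wo : walk e (a :: rcons (s1 ++ y :: s3) a).
  by rewrite rcons_cat /= -/(walk e (a :: s1 ++ y :: rcons s3 a)) walk_split w1 w3.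
have := IH a (s1 ++ y :: s3); rewrite rcons_cat wpar_split => -> //.
  by move: hk; rewrite !size_cat /= size_cat /= ltnS; lia.
by move: wo; rewrite rcons_cat.
Qed.


Lemma harary n (e : rel 'I_n) (w : 'I_n -> 'I_n -> bool) :
  symmetric e -> irreflexive e -> connected_graph e -> (forall x y, w x y = w y x) ->
  (forall c, is_cycle e c -> cpar w c = false) ->
  exists s : 'I_n -> bool, forall i j, e i j -> w i j = s i (+) s j.
Proof.
case: n e w => [|n] e w hs hi hc hw hcyc.
  by exists (fun _ => false) => [[]].
pose r : 'I_n.+1 := ord0.
have ex : forall v, exists p, path e r p && (last r p == v).
  by move=> v; case/connectP: (hc r v) => p hp ->; exists p; rewrite hp eqxx.
pose pth v := xchoose (ex v).
have hp : forall v, path e r (pth v) && (last r (pth v) == v) := fun v => xchooseP (ex v).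
exists (fun v => wpar w (r :: pth v)) => u v euv.
case/andP: (hp u) => pu /eqP lu; case/andP: (hp v) => pv /eqP lv.
have [c [t [E L]]] := rev_ne r (pth v).
have hc' : c = v.
  by have := congr1 (fun s => last r (rev s)) E; rewrite /= revK rev_cons last_rcons /= lv.
have S1 : walk e (r :: pth u ++ c :: t).
  by rewrite walk_cat -E walk_rev // /= pu lu hc' euv pv.
have S2 : r :: pth u ++ c :: t = r :: rcons (pth u ++ belast c t) r.
  by rewrite rcons_cat -L -lastI.
have := closed_walk hi hw hcyc (a := r) (q := pth u ++ belast c t); rewrite -S2 => /(_ S1).
rewrite wpar_cat -E wpar_rev // lu hc'.
by case: (w u v); case: (wpar w (r :: pth u)); case: (wpar w (r :: pth v)).
Qed.


Lemma is_cycleP n (e : rel 'I_n) c : is_cycle e c -> [/\ uniq c, (2 < size c)%N & cycle e c].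
Proof. by case/andP => s3 /andP [cy u]. Qed.

Lemma cycle_sw n (e : rel 'I_n) (pi : {set 'I_n} -> bool) sg (s : 'I_n -> bool) c :
  is_cycle e c -> (forall i j, e i j -> pi [set i; j] = sg (+) s i (+) s j) ->
  cpar (fun a b => pi [set a; b]) c = sg && odd (size c).
Proof.
move=> /is_cycleP [u s3 cy] hsw.
have -> : cpar (fun a b => pi [set a; b]) c = cpar (fun a b => sg (+) (s a (+) s b)) c.
  rewrite /cpar; apply: eq_big_seq => x xc.
  by rewrite hsw ?addbA //; exact: next_cycle cy xc.
rewrite /cpar xor_const -/(cpar (fun a b => s a (+) s b) c).
case: c u s3 {cy} => [|a q] u s3 //.
by rewrite -np // /= wparh_tele last_rcons addbb addbF.
Qed.

Lemma cycle_edge n (e : rel 'I_n) c : is_cycle e c -> exists i j, e i j.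
Proof.
move=> /is_cycleP [u s3 cy]; case: c u s3 cy => [|a q] // u s3 cy.
by exists a, (next (a :: q) a); apply: (next_cycle cy); rewrite inE eqxx.
Qed.

Lemma cycle_head_edge n (e : rel 'I_n) c : is_cycle e c ->
  exists2 x, x \in c & [set x; next c x] \in cycle_edges c.
Proof.
move=> /is_cycleP [u s3 cy]; case: c u s3 cy => [|a q] // u s3 cy.
exists a; first by rewrite inE eqxx.
by apply/imsetP; exists a => //; rewrite inE eqxx.
Qed.


Lemma pi_sym n (pi : {set 'I_n} -> bool) (sg : bool) :
  forall x y, sg (+) pi [set x; y] = sg (+) pi [set y; x].
Proof. by move=> x y; rewrite finset.setUC. Qed.

Unset Implicit Arguments. Set Strict Implicit. Set Printing Implicit Defensive.

Theorem mainTheorem2 (R : realType) (n : nat) (e : rel 'I_n) :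
  simple_graph e -> connected_graph e ->
  ((forall pi : {set 'I_n} -> bool,
      ~ (spec_rad (signed_adj R e pi) < spec_rad (adj R e)))
   <-> (is_tree e \/ is_odd_unicyclic e)).
Proof.
move=> hsg hc; have [hs hi] := hsg; split.
- move=> H; apply: NNPP => hn.
  have [c0 hc0] : exists c, is_cycle e c.
    apply: NNPP => hnc; apply: hn; left; split => // c; apply/negP => hcc.
    by apply: hnc; exists c.
  have rp : 0 < spec_rad (adj R e).
    by have [i [j eij]] := cycle_edge hc0; exact: sr_pos hsg eij.
  have KEY : forall X : {set 'I_n}, exists sg, forall c, is_cycle e c ->
      (X \in cycle_edges c) = sg && odd (size c).
    move=> X; pose pi := fun Y : {set 'I_n} => Y == X.
    have heq : spec_rad (signed_adj R e pi) = spec_rad (adj R e).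
      apply/le_anti; rewrite sr_le //=; rewrite leNgt; apply/negP; exact: H.
    have [sg [s hsw]] := sr_strict hsg hc rp heq.
    exists sg => c hcyc; rewrite -(cycle_sw hcyc hsw).
    have [u s3 _] := is_cycleP hcyc.
    by rewrite (cpar_edges (fun Y => Y == X) u s3) xor_mem.
  have allodd : forall c, is_cycle e c -> odd (size c).
    move=> c hcyc; have [x _ hx] := cycle_head_edge hcyc.
    have [sg hsg'] := KEY [set x; next c x].
    by move: (hsg' c hcyc); rewrite hx; case: (odd (size c)); rewrite ?andbF.
  apply: hn; right; split => //; exists c0; split => //; last exact: allodd.
  move=> c' hc'; apply/eqP; apply: contraT => hne.
  have [X hX] : exists X, (X \in cycle_edges c') != (X \in cycle_edges c0).
    apply: NNPP => hno; apply/negP: hne; rewrite negbK; apply/eqP/setP => X.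
    by apply/eqP; apply: contraT => hX; exfalso; apply: hno; exists X.
  have [sg hsg'] := KEY X.
  by move: hX; rewrite (hsg' _ hc') (hsg' _ hc0) !allodd // eqxx.
- move=> H pi; apply/negP; rewrite -leNgt; apply: sr_ge_switch => //.
  case: H => [[_ hnc]|[_ [c0 [hc0 hall hodd]]]].
    have [s hs'] := harary (w := fun x y => false (+) pi [set x; y]) hs hi hc
      (@pi_sym n pi false) (fun c hcyc => ltac:(by move: (hnc c); rewrite hcyc)).
    by exists false, s => i j eij; rewrite -hs'.
  set tau := cpar (fun a b => pi [set a; b]) c0.
  have hcyc : forall c, is_cycle e c -> cpar (fun x y => tau (+) pi [set x; y]) c = false.
    move=> c hcy; have [u s3 _] := is_cycleP hcy; have [u0 s30 _] := is_cycleP hc0.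
    rewrite /cpar xor_const -/(cpar (fun a b => pi [set a; b]) c).
    rewrite (cpar_edges pi u s3) (hall c hcy) -(cpar_edges pi u0 s30) -/tau.
    have -> : odd (size c) by rewrite -(card_edges u s3) (hall c hcy) card_edges.
    by rewrite andbT addbb.
  have [s hs'] := harary hs hi hc (@pi_sym n pi tau) hcyc.
  exists tau, s => i j eij.
  by rewrite -addbA -(hs' i j eij) addbA addbb.
Qed.
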